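(* Let $K\subseteq\mathbb{R}^n$ be a proper cone and let $A\in\mathbb{R}^{n\times n}$ be $K$-monotone. Let $A=U-V$ be a $K$-regular splitting. Let $U=F-G=\overline{F}-\overline{G}$ be two $K$-weak regular splittings of type II of $U$ such that $VF^{-1}G=GF^{-1}V$ and $V\overline{F}^{-1}\overline{G}=\overline{G}\,\overline{F}^{-1}V$. For a positive integer $s$ define $$T_{s}=(F^{-1}G)^{s}+\sum_{j=0}^{s-1}(F^{-1}G)^{j}F^{-1}V,\qquad \overline{T}_{s}=(\overline{F}^{-1}\overline{G})^{s}+\sum_{j=0}^{s-1}(\overline{F}^{-1}\overline{G})^{j}\overline{F}^{-1}V,$$ $$\widehat{\overline{T}}_{s}=(\overline{G}\,\overline{F}^{-1})^{s}+\sum_{j=0}^{s-1}(\overline{G}\,\overline{F}^{-1})^{j}V\overline{F}^{-1},$$ and let $\overline{P}_s$ be the matrix with $\overline{P}_s^{-1}=\sum_{j=0}^{s-1}(\overline{F}^{-1}\overline{G})^j\overline{F}^{-1}$. Suppose that (i) $\widehat{\overline{T}}_s\overline{P}_s\geq_K 0$ for every positive integer $s$, (ii) $F^{-1}\geq_K\overline{F}^{-1}$, (iii) $\overline{F}^{-1}\overline{G}\geq_K 0$. Then $\rho(T_s)\leq\rho(\overline{T}_s)<1$.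
   Context: A proper cone $K\subseteq\mathbb{R}^n$ is a closed, convex, pointed, solid cone. For $M\in\mathbb{R}^{n\times n}$, $M\geq_K 0$ means $MK\subseteq K$, and $M\geq_K N$ means $M-N\geq_K0$. A matrix $A$ is $K$-monotone if $A$ is nonsingular and $A^{-1}\geq_K 0$. A splitting $A=U-V$ (with $U$ nonsingular) is $K$-regular if $U^{-1}\geq_K 0$ and $V\geq_K 0$; it is a $K$-weak regular splitting of type II if $U^{-1}\geq_K 0$ and $VU^{-1}\geq_K 0$. $\rho$ denotes spectral radius. *)

(* Defs.v *)
From HB Require Import structures.
From mathcomp Require Import all_boot all_order all_algebra.
From mathcomp Require Import all_classical all_reals all_analysis.
From mathcomp Require Import complex.

Set Implicit Arguments.
Unset Strict Implicit.
Unset Printing Implicit Defensive.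

Import Order.TTheory GRing.Theory Num.Theory.
Import numFieldNormedType.Exports.

Local Open Scope classical_set_scope.
Local Open Scope ring_scope.

Section ConeDefs.
Variables (R : realType) (n : nat).
Implicit Types (K : set 'cV[R]_n) (M N : 'M[R]_n).

Definition is_cone K := forall (a : R) x, 0 <= a -> K x -> K (a *: x).
Definition cone_convex K :=
  forall (t : R) x y, 0 <= t <= 1 -> K x -> K y -> K (t *: x + (1 - t) *: y).
Definition cone_pointed K := forall x, K x -> K (- x) -> x = 0.
Definition cone_solid K := (K)° !=set0.

Definition proper_cone K :=
  [/\ is_cone K, closed K, cone_convex K, cone_pointed K & cone_solid K].

Definition Knonneg K M := forall x, K x -> K (M *m x).
Definition Kge K M N := Knonneg K (M - N).

Definition K_monotone K A := A \in unitmx /\ Knonneg K (invmx A).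

Definition K_regular_splitting K A U V :=
  [/\ A = U - V, U \in unitmx, Knonneg K (invmx U) & Knonneg K V].

Definition K_weak_regular_splitting_II K A U V :=
  [/\ A = U - V, U \in unitmx, Knonneg K (invmx U) & Knonneg K (V *m invmx U)].

(* matrix power for square matrices of arbitrary size n *)
Definition mxpow M (k : nat) : 'M[R]_n := iter k (mulmx M) 1%:M.

(* spectral radius: largest modulus of a complex eigenvalue
   (root of the characteristic polynomial over R[i]); 0 if n = 0 *)
Definition spectral_radius M : R :=
  sup [set r : R | exists l : R[i],
         root (char_poly (map_mx (fun x : R => x%:C%C) M)) l /\ r = Normc.normc l].

End ConeDefs.

(* Main.v *)
Require Import Defs.
From HB Require Import structures.
From mathcomp Require Import all_boot all_order all_algebra.
From mathcomp Require Import all_classical all_reals all_analysis.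
From mathcomp Require Import complex.
From mathcomp Require Import ring lra.

Import Order.TTheory GRing.Theory Num.Theory.
Local Open Scope classical_set_scope.
Local Open Scope ring_scope.

Import numFieldNormedType.Exports.
Set Implicit Arguments. Unset Strict Implicit. Unset Printing Implicit Defensive.

Section Common.
Variable R : realType.
Local Notation nc := (@Normc.normc R).
Local Notation toC := (fun x : R => x%:C%C).

Lemma nc_ge0 (x : R[i]) : 0 <= nc x.
Proof. by case: x => a b; rewrite /Normc.normc sqrtr_ge0. Qed.

Lemma map_mxXC m (M : 'M[R]_m.+1) k : map_mx toC (M ^+ k) = (map_mx toC M) ^+ k.
Proof.
elim: k => [|k IH]; first by rewrite !expr0; apply/matrixP => i j; rewrite !mxE; case: (i == j).
by rewrite !exprS -IH; apply: map_mxM.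
Qed.

Lemma ncX (x : R[i]) n : nc (x ^+ n) = nc x ^+ n.
Proof. by elim: n => [|n IH]; rewrite ?expr0 ?Normc.normc1 // !exprS Normc.normcM IH. Qed.

Lemma nc_real (x : R) : nc x%:C%C = `|x|.
Proof. by rewrite /Normc.normc /= expr0n /= addr0 sqrtr_sqr. Qed.
End Common.

Section T.
Variables (R : realType) (n : nat).
Implicit Types (K : set 'cV[R]_n).

Lemma closed_lim K (q : 'cV[R]_n) : closed K ->
  (forall d : R, 0 < d -> exists v : 'cV[R]_n, (forall i, `|v i 0| <= d) /\ K (v + q)) -> K q.
Proof.
move=> cK H; apply: cK => B /nbhs_ballP [e e0 sB].
have e20 : 0 < e / 2 by rewrite divr_gt0.
have [v [vb Kv]] := H _ e20.
exists (v + q); split => //; apply: sB.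
split => // i j; rewrite (ord1 j) /ball /= !mxE.
rewrite opprD addrCA subrr addr0 normrN.
by apply: (le_lt_trans (vb i)); rewrite ltr_pdivrMr // ltr_pMr // ltr1n.
Qed.

Lemma interior_bound K (e z : 'cV[R]_n) : is_cone K -> (K)° e ->
  exists c : R, 0 <= c /\ K (c *: e + z) /\ K (c *: e - z).
Proof.
move=> cK /nbhs_ballP [r r0 sB].
pose m := \sum_i `|z i 0|.
have m0 : 0 <= m by apply: sumr_ge0 => i _.
pose s := r / (2 * (m + 1)).
have s0 : 0 < s by rewrite divr_gt0 // mulr_gt0 // ltr_wpDl.
have hb : forall i, s * `|z i 0| < r.
  move=> i; have zm : `|z i 0| <= m by rewrite /m (bigD1 i) //= lerDl sumr_ge0.
  apply: (le_lt_trans (y := s * m)); first by rewrite ler_pM2l.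
  apply: (le_lt_trans (y := s * (m + 1))); first by rewrite ler_pM2l // lerDl.
  rewrite /s invfM mulrA mulfVK ?gt_eqF ?ltr_wpDl //.
  by rewrite ltr_pdivrMr // ltr_pMr // ltr1n.
have K1 : K (e + s *: z).
  apply: sB; split => // i j; rewrite (ord1 j) /ball /= !mxE.
  by rewrite opprD addrA subrr sub0r normrN normrM gtr0_norm.
have K2 : K (e - s *: z).
  apply: sB; split => // i j; rewrite (ord1 j) /ball /= !mxE.
  by rewrite opprD addrA subrr sub0r opprK normrM gtr0_norm.
exists s^-1; split; first by rewrite invr_ge0 ltW.
split.
  have -> : s^-1 *: e + z = s^-1 *: (e + s *: z) by rewrite scalerDr scalerA mulVf ?gt_eqF // scale1r.
  by apply: cK; rewrite // invr_ge0 ltW.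
have -> : s^-1 *: e - z = s^-1 *: (e - s *: z) by rewrite scalerBr scalerA mulVf ?gt_eqF // scale1r.
by apply: cK; rewrite // invr_ge0 ltW.
Qed.
End T.

Lemma char_poly_tr (F : fieldType) m (A : 'M[F]_m) : char_poly A^T = char_poly A.
Proof.
rewrite /char_poly -det_tr; congr (\det _).
by rewrite /char_poly_mx linearB /= tr_scalar_mx map_trmx trmxK. Qed.

Lemma eigvec (F : fieldType) m (A : 'M[F]_m) a : root (char_poly A) a ->
  exists2 w : 'cV[F]_m, w != 0 & A *m w = a *: w.
Proof.
rewrite -char_poly_tr -eigenvalue_root_char.

move=> /eigenvalueP [v vA v0].
exists v^T; first by rewrite trmx_eq0.
by rewrite -[A]trmxK -trmx_mul vA linearZ.
Qed.

Lemma seq_argmax (T : eqType) (R : realType) (s : seq T) (f : T -> R) :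
  s != [::] -> exists2 x, x \in s & forall y, y \in s -> f y <= f x.
Proof.
elim: s => [//|a s IH] _.
case: (eqVneq s [::]) => [->|/IH [x xs xm]].
  by exists a; rewrite ?inE // => y; rewrite inE => /eqP ->.
case: (leP (f a) (f x)) => h.
  exists x; first by rewrite inE xs orbT.
  by move=> y; rewrite inE => /orP [/eqP ->|/xm].
exists a; first by rewrite inE eqxx.
move=> y; rewrite inE => /orP [/eqP ->//|/xm hy].
exact: (le_trans hy (ltW h)).
Qed.

Section Rho.
Variable R : realType.
Local Notation toC := (fun x : R => x%:C%C).

Lemma rho_spec m (M : 'M[R]_m.+1) :
  exists l, [/\ root (char_poly (map_mx toC M)) l,
    spectral_radius M = Normc.normc l &
    forall l', root (char_poly (map_mx toC M)) l' -> Normc.normc l' <= Normc.normc l].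
Proof.
set p := char_poly _.
have [r pr] := closed_field_poly_normal p.
have pm : p \is monic by apply: char_poly_monic.
rewrite (monicP pm) scale1r in pr.
have rootE x : root p x = (x \in r) by rewrite pr root_prod_XsubC.
have r0 : r != [::].
  apply/eqP => r0; move: (size_char_poly (map_mx toC M)); rewrite -/p pr r0 big_nil size_poly1.
  by [].
have [l lr lm] := seq_argmax (fun x => Normc.normc x) r0.
exists l; split; first by rewrite rootE.
  apply/eqP; rewrite eq_le; apply/andP; split.
    apply: ge_sup; first by exists (Normc.normc l), l; rewrite rootE.
    by move=> _ [l' [rl' ->]]; apply: lm; rewrite -rootE.
  have hub : has_ubound [set r0 : R | exists l0, root p l0 /\ r0 = Normc.normc l0].
    by exists (Normc.normc l) => _ [l' [rl' ->]]; apply: lm; rewrite -rootE.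
  by apply: (ub_le_sup hub); exists l; rewrite rootE.
by move=> l'; rewrite rootE; apply: lm.
Qed.
End Rho.

Section Seq.
Variable R : realType.

Lemma bern (h : R) (m : nat) : 0 <= h -> 1 + m%:R * h <= (1 + h) ^+ m.
Proof.
move=> h0; elim: m => [|m IH]; first by rewrite mul0r addr0 expr0.
rewrite exprS -natr1 mulrDl mul1r.
have hm : 0 <= m%:R * h by rewrite mulr_ge0.
have : (1 + h) * (1 + m%:R * h) <= (1 + h) * (1 + h) ^+ m by rewrite ler_pM2l // ltr_wpDr.
nra.
Qed.

Lemma geo_small (q C e : R) : 0 <= q < 1 -> 0 < e -> exists m, q ^+ m * C <= e.
Proof.
move=> /andP [q0 q1] e0.
have [->|qn0] := eqVneq q 0.
  by exists 1%N; rewrite expr1 mul0r ltW.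
have qp : 0 < q by rewrite lt_def qn0.
pose h := q^-1 - 1.
have h0 : 0 < h by rewrite /h subr_gt0 invf_gt1.
pose m := Num.Def.archi_bound (`|C| / (e * h)).
have hm : `|C| / (e * h) < m%:R by apply: archi_boundP; rewrite divr_ge0 // ltW // mulr_gt0.
exists m.
have qm : q ^+ m * (1 + h) ^+ m = 1.
  by rewrite -exprMn /h addrC subrK mulfV // expr1n.
have b := bern m (ltW h0).
have qm0 : 0 < q ^+ m by rewrite exprn_gt0.
have : q ^+ m * C <= q ^+ m * `|C| by rewrite ler_pM2l // ler_norm.
move: hm; rewrite ltr_pdivrMr ?mulr_gt0 // => hm.
have C0 : 0 <= `|C| by [].
have : q ^+ m * (m%:R * h) <= 1.
  apply: (@le_trans _ _ (q ^+ m * (1 + h) ^+ m)); last by rewrite qm.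
  by rewrite ler_pM2l //; lra.
nra.
Qed.

Lemma contr_seq (x y : nat -> R) (q : R) : 0 <= q < 1 -> (forall k, 0 <= x k) ->
  (forall k, x k.+1 <= q * x k + y k) ->
  (forall e, 0 < e -> exists N, forall k, (N <= k)%N -> y k <= e) ->
  forall e, 0 < e -> exists N, forall k, (N <= k)%N -> x k <= e.
Proof.
move=> /andP [q0 q1] x0 xr yc e e0.
have e20 : 0 < e / 2 * (1 - q) by rewrite mulr_gt0 ?divr_gt0 // subr_gt0.
have [N HN] := yc _ e20.
have cl : forall j, x (N + j)%N <= q ^+ j * x N + e / 2.
  elim => [|j IH]; first by rewrite addn0 expr0 mul1r lerDl divr_ge0 // ltW.
  rewrite addnS (le_trans (xr _)) //.
  have := HN (N + j)%N (leq_addr _ _).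
  have : q * x (N + j)%N <= q * (q ^+ j * x N + e / 2) by rewrite ler_wpM2l.
  rewrite exprS; nra.
have [m Hm] : exists m, q ^+ m * x N <= e / 2.
  by apply: geo_small; rewrite ?q0 ?q1 // divr_gt0.
exists (N + m)%N => k Nk.
have -> : k = (N + (k - N))%N by rewrite subnKC // (leq_trans (leq_addr _ _) Nk).
apply: (le_trans (cl _)).
have : q ^+ (k - N) <= q ^+ m.
  apply: ler_wiXn2l => //; first exact: ltW.
  by rewrite leq_subRL ?(leq_trans (leq_addr _ _) Nk).
have := x0 N.
nra.
Qed.
End Seq.

Section Pow.
Variable R : realType.
Local Notation nc := (@Normc.normc R).



Definition nmx p q (X : 'M[R[i]]_(p, q)) : R := \sum_i \sum_j nc (X i j).

Lemma nmx_ge0 p q (X : 'M[R[i]]_(p, q)) : 0 <= nmx X.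
Proof. by apply: sumr_ge0 => i _; apply: sumr_ge0 => j _; apply: nc_ge0. Qed.

Lemma nmxD p q (X Y : 'M[R[i]]_(p, q)) : nmx (X + Y) <= nmx X + nmx Y.
Proof.
rewrite /nmx -big_split /=; apply: ler_sum => i _.
rewrite -big_split /=; apply: ler_sum => j _; rewrite mxE.
exact: le_normcD.
Qed.

Lemma nmxZ p q c (X : 'M[R[i]]_(p, q)) : nmx (c *: X) = nc c * nmx X.
Proof.
rewrite /nmx mulr_sumr; apply: eq_bigr => i _; rewrite mulr_sumr.
by apply: eq_bigr => j _; rewrite mxE Normc.normcM.
Qed.

Lemma nmx_entry p q (X : 'M[R[i]]_(p, q)) i j : nc (X i j) <= nmx X.
Proof.
rewrite /nmx (bigD1 i) //= (bigD1 j) //= -addrA lerDl.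
apply: addr_ge0; first by apply: sumr_ge0 => ? _; apply: nc_ge0.
by apply: sumr_ge0 => ? _; apply: sumr_ge0 => ? _; apply: nc_ge0.
Qed.

Definition cv0 (f : nat -> R) := forall e, 0 < e -> exists N, forall k, (N <= k)%N -> f k <= e.

Variable m : nat.
Variable Mc : 'M[R[i]]_m.+1.
Variable t : R.
Hypothesis t0 : 0 < t.
Local Notation ct := (t%:C%C).

Definition aP (P : 'M[R[i]]_m.+1) k := (ct^-1) ^+ k *: (P * Mc ^+ k).



Lemma ct_neq0 : ct != 0.
Proof. by rewrite eq_complex /= gt_eqF. Qed.

Lemma step (P : 'M[R[i]]_m.+1) (l : R[i]) : nc l < t -> P * Mc = Mc * P ->
  cv0 (fun k => nmx (aP ((Mc - l%:M) * P) k)) -> cv0 (fun k => nmx (aP P k)).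
Proof.
move=> lt PM cQ.
have rec k : aP P k.+1 = (l * ct^-1) *: aP P k + ct^-1 *: aP ((Mc - l%:M) * P) k.
  have E : P * Mc ^+ k.+1 = l *: (P * Mc ^+ k) + (Mc - l%:M) * P * Mc ^+ k.
    rewrite exprS mulrA PM -!mulrA mulrBl -scalemx1 -scalerAl mul1r.
    by rewrite addrC subrK.
  rewrite /aP E scalerDr !scalerA exprS.
  by congr (_ *: _ + _ *: _); rewrite mulrC mulrA.
have ncV : nc (ct^-1) = t^-1 by rewrite Normc.normcV nc_real gtr0_norm.
apply: (@contr_seq _ _ (fun k => t^-1 * nmx (aP ((Mc - l%:M) * P) k)) (nc l / t)).
- by rewrite divr_ge0 ?nc_ge0 ?ltW //= ltr_pdivrMr // mul1r.
- by move=> k; apply: nmx_ge0.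
- move=> k; rewrite rec; apply: (le_trans (nmxD _ _)).
  by rewrite !nmxZ Normc.normcM ncV.
- move=> e e0; have [N HN] := cQ (e * t) (mulr_gt0 e0 t0).
  exists N => k /HN h; rewrite mulrC ler_pdivrMr //.
Qed.


Lemma pow_cv0 : (forall l, root (char_poly Mc) l -> nc l < t) ->
  cv0 (fun k => nmx (aP 1 k)).
Proof.
move=> hroot.
have [r pr] := closed_field_poly_normal (char_poly Mc).
rewrite (monicP (char_poly_monic Mc)) scale1r in pr.
pose PP l := \prod_(z <- l) (Mc - z%:M).
have CH : PP r = 0.
  rewrite -(Cayley_Hamilton Mc) pr rmorph_prod; apply: eq_bigr => z _.
  by rewrite rmorphB /= horner_mx_X horner_mx_C.
have comm l : PP l * Mc = Mc * PP l.
  apply/esym; apply: commr_prod => z _.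
  rewrite /GRing.comm mulrBr mulrBl -scalemx1 -scalerAl -scalerAr mul1r mulr1.
  by [].
have key : forall r1 l, all (fun z => nc z < t) r1 ->
    cv0 (fun k => nmx (aP (PP (r1 ++ l)) k)) -> cv0 (fun k => nmx (aP (PP l) k)).
  elim => [//|z r1 IH] l /andP [hz hr] h.
  apply: (IH l hr); apply: (step hz); first exact: comm.
  by move: h; rewrite /PP cat_cons big_cons.
have := key r [::].
rewrite cats0 CH /PP big_nil; apply.
  apply/allP => z zr; apply: hroot.
  by rewrite pr root_prod_XsubC.
move=> e e0; exists 0%N => k _.
by rewrite /aP mul0r scaler0 /nmx big1 ?ltW // => i _; rewrite big1 // => j _; rewrite mxE /Normc.normc /= expr0n /= addr0 sqrtr0.
Qed.
End Pow.

Section RealPow.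
Variable R : realType.
Local Notation nc := (@Normc.normc R).
Local Notation toC := (fun x : R => x%:C%C).



Lemma real_pow_small m (M : 'M[R]_m.+1) (t : R) : 0 < t ->
  (forall l, root (char_poly (map_mx toC M)) l -> nc l < t) ->
  forall e, 0 < e -> exists N, forall k, (N <= k)%N -> forall i j, `|(M ^+ k) i j| <= e * t ^+ k.
Proof.
move=> t0 hr e e0; have [N HN] := pow_cv0 t0 hr e0.
exists N => k /HN h i j.
have := le_trans (nmx_entry _ i j) h.
rewrite /aP mul1r mxE -map_mxXC mxE Normc.normcM.
have ncX (x : R[i]) n : nc (x ^+ n) = nc x ^+ n.
  by elim: n => [|n IH]; rewrite ?expr0 ?Normc.normc1 // !exprS Normc.normcM IH.
rewrite ncX Normc.normcV !nc_real gtr0_norm //.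
rewrite mulrC -ler_pdivlMr ?exprn_gt0 ?invr_gt0 //.
by rewrite exprVn invrK.
Qed.
End RealPow.

Section Eig.
Variable R : realType.
Local Notation nc := (@Normc.normc R).
Local Notation toC := (fun x : R => x%:C%C).
Definition reV p (x : 'cV[R[i]]_p) : 'cV[R]_p := map_mx (@complex.Re R) x.
Definition imV p (x : 'cV[R[i]]_p) : 'cV[R]_p := map_mx (@complex.Im R) x.

Lemma ReD (a b : R[i]) : complex.Re (a + b) = complex.Re a + complex.Re b. Proof. by case: a; case: b. Qed.
Lemma Re0 : complex.Re (0 : R[i]) = 0. Proof. by []. Qed.
Lemma ReRM (k : R) (z : R[i]) : complex.Re (k%:C%C * z) = k * complex.Re z.
Proof. by case: z => a b /=; rewrite mul0r subr0. Qed.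

Lemma reV_mul p q (B : 'M[R]_(p, q)) x : reV (map_mx toC B *m x) = B *m reV x.
Proof.
apply/matrixP => i j; rewrite !mxE (big_morph _ ReD Re0); apply: eq_bigr => l _.
by rewrite !mxE ReRM.
Qed.

Lemma reVZ p (z : R[i]) (x : 'cV[R[i]]_p) : reV (z *: x) = complex.Re z *: reV x - complex.Im z *: imV x.
Proof.
apply/matrixP => i j; rewrite !mxE; case: z => a b; case: (x i j) => c d /=.
by [].
Qed.

Lemma reV_real p (k : R) (x : 'cV[R[i]]_p) : reV (k%:C%C *: x) = k *: reV x.
Proof. by rewrite reVZ /= scale0r subr0. Qed.


Definition cone_ok p (L : 'cV[R]_p -> Prop) :=
  [/\ L 0, (forall a x, 0 <= a -> L x -> L (a *: x)) & (forall x y, L x -> L y -> L (x + y))].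

Lemma cone_mix p (L : 'cV[R]_p -> Prop) (e u : 'cV[R]_p) (c a : R) : cone_ok L ->
  L (c *: e + u) -> L (c *: e - u) -> -1 <= a <= 1 -> L (c *: e + a *: u).
Proof.
move=> [L0 LZ LD] h1 h2 /andP [a1 a2].
have -> : c *: e + a *: u = ((1 + a) / 2) *: (c *: e + u) + ((1 - a) / 2) *: (c *: e - u).
  by apply/matrixP => i j; rewrite !mxE; field.
apply: LD; apply: LZ => //; apply: divr_ge0 => //.
  lra.
lra.
Qed.



Lemma nc_sqr (x : R[i]) : nc x ^+ 2 = complex.Re x ^+ 2 + complex.Im x ^+ 2.
Proof. by case: x => a b; rewrite /Normc.normc /= sqr_sqrtr // addr_ge0 ?sqr_ge0. Qed.

Lemma unit_bound p (L : 'cV[R]_p -> Prop) (e : 'cV[R]_p) (w : 'cV[R[i]]_p) (c : R) :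
  cone_ok L -> L (c *: e + reV w) -> L (c *: e - reV w) -> L (c *: e + imV w) ->
  L (c *: e - imV w) -> forall z, nc z = 1 -> L ((c + c) *: e - reV (z *: w)).
Proof.
move=> cL h1 h2 h3 h4 z z1.
have zs := nc_sqr z; rewrite z1 expr1n in zs.
set a := complex.Re z in zs *; set b := complex.Im z in zs *.
rewrite reVZ -/a -/b.
have -> : (c + c) *: e - (a *: reV w - b *: imV w) = (c *: e + (- a) *: reV w) + (c *: e + b *: imV w).
  by apply/matrixP => i j; rewrite !mxE; ring.
case: (cL) => _ _ LD; apply: LD; apply: cone_mix => //.
  by apply/andP; split; nra.
by apply/andP; split; nra.
Qed.







Lemma nc_conj (x : R[i]) : nc (x^*)%C = nc x.
Proof. by case: x => a b; rewrite /Normc.normc /= sqrrN. Qed.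

Lemma conj_mul (x : R[i]) : ((x^*)%C * x) = (nc x ^+ 2)%:C%C.
Proof.
rewrite nc_sqr; case: x => a b /=; apply/eqP; rewrite eq_complex /=; apply/andP; split; apply/eqP; ring.
Qed.

Lemma eig_bound m (L : 'cV[R]_m.+1 -> Prop) (B : 'M[R]_m.+1) (mu : R[i])
    (w : 'cV[R[i]]_m.+1) (e : 'cV[R]_m.+1) (c : R) :
  cone_ok L -> (forall x, L x -> L (B *m x)) ->
  map_mx toC B *m w = mu *: w -> mu != 0 ->
  L (c *: e + reV w) -> L (c *: e - reV w) -> L (c *: e + imV w) -> L (c *: e - imV w) ->
  forall z0, nc z0 = 1 -> forall k,
    L ((c + c) *: (B ^+ k *m e) - nc mu ^+ k *: reV (z0 *: w)).
Proof.
move=> cL BL Bw mu0 h1 h2 h3 h4 z0 z01 k.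
have nmu0 : nc mu != 0 by apply: contra mu0 => /eqP /Normc.eq0_normc ->.
have nmuC0 : (nc mu)%:C%C != 0 by rewrite eq_complex /= negb_and nmu0.
pose r := ((mu^*)%C / (nc mu)%:C%C).
have r1 : nc r = 1.
  by rewrite Normc.normcM Normc.normcV nc_conj nc_real ger0_norm ?nc_ge0 // mulfV.
pose z := z0 * r ^+ k.
have z1 : nc z = 1 by rewrite Normc.normcM ncX r1 expr1n mulr1.
have Bk : forall j, (map_mx toC B) ^+ j *m w = mu ^+ j *: w.
  elim => [|j IH]; first by rewrite expr0 scale1r mul1mx.
  by rewrite exprS -mulmxE -mulmxA IH -scalemxAr Bw scalerA -exprSr.
have BkL : forall j x, L x -> L (B ^+ j *m x).
  elim => [|j IH] x Lx; first by rewrite expr0 mul1mx.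
  by rewrite exprS -mulmxE -mulmxA; apply: BL; apply: IH.
have := BkL k _ (unit_bound cL h1 h2 h3 h4 z1).
have E1 : (map_mx toC B) ^+ k *m (z *: w) = z *: ((map_mx toC B) ^+ k *m w) by rewrite scalemxAr.
rewrite mulmxBr scalemxAr -reV_mul map_mxXC E1 Bk scalerA.
have -> : z * mu ^+ k = (nc mu ^+ k)%:C%C * z0.
  rewrite /z -mulrA -exprMn /r mulrAC conj_mul -[(nc mu ^+ 2)]/(nc mu * nc mu).
  rewrite rmorphM /= -mulrA mulfV // mulr1 mulrC; congr (_ * _).
  by rewrite rmorphXn.
by rewrite -scalerA reV_real.
Qed.

End Eig.

Section Alg.
Variable Rg : pzRingType.

Lemma tele (M : Rg) N : \sum_(j < N) M ^+ j * (1 - M) = 1 - M ^+ N.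
Proof.
elim: N => [|N IH]; first by rewrite big_ord0 expr0 subrr.
rewrite big_ord_recr /= IH mulrBr mulr1 -exprSr addrA subrK //.
Qed.

Lemma tele' (M : Rg) N : (1 - M) * \sum_(j < N) M ^+ j = 1 - M ^+ N.
Proof.
rewrite -(tele M N) mulr_sumr; apply: eq_bigr => j _.
by rewrite mulrBl mulrBr mul1r mulr1 -exprS -exprSr.
Qed.

Lemma powcomm (P Q : Rg) j : (P * Q) ^+ j * P = P * (Q * P) ^+ j.
Proof.
elim: j => [|j IH]; first by rewrite !expr0 mul1r mulr1.
by rewrite exprSr -!mulrA mulrA IH -mulrA -exprSr.
Qed.

Lemma sub3 (x a b : Rg) : x - ((x - a) - b) = a + b.
Proof. by rewrite !opprB addrA addrC addrA subrK addrC. Qed.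
End Alg.

Section Conv.
Variables (R : realType) (m : nat).
Lemma mxpowE (M : 'M[R]_m.+1) : mxpow M = GRing.exp M.
Proof.
apply: funext => k; elim: k => [|k IH] //=.
by rewrite /mxpow /= -/(mxpow M k) IH exprS.
Qed.
End Conv.


Section Cone.
Variables (R : realType) (m : nat) (K : set 'cV[R]_m.+1).
Hypothesis pK : proper_cone K.
Local Notation nc := (@Normc.normc R).
Local Notation toC := (fun x : R => x%:C%C).
Local Notation KN := (Knonneg K).

Lemma K_int : exists e, (K)° e.
Proof. by case: pK => _ _ _ _ [e he]; exists e. Qed.

Lemma cone_K : cone_ok K.
Proof.
case: pK => cK _ cvK _ [e he].
have Ke : K e by apply: nbhs_singleton.
have K0 : K 0 by rewrite -(scale0r e); apply: cK.
split => // x y Kx Ky.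
have -> : x + y = 2 *: ((1 / 2) *: x + (1 - 1 / 2) *: y).
  by apply/matrixP => i j; rewrite !mxE; field.
apply: cK => //; apply: cvK => //; apply/andP; split; lra.
Qed.

Lemma KD x y : K x -> K y -> K (x + y).
Proof. by case: cone_K => _ _; apply. Qed.
Lemma KZ a x : 0 <= a -> K x -> K (a *: x).
Proof. by case: cone_K => _ h _; apply: h. Qed.
Lemma K0 : K 0.
Proof. by case: cone_K. Qed.
Lemma Kpt x : K x -> K (- x) -> x = 0.
Proof. by case: pK => _ _ _ h _; apply: h. Qed.

Lemma Ksum I (r : seq I) (P : pred I) (f : I -> 'cV[R]_m.+1) :
  (forall i, P i -> K (f i)) -> K (\sum_(i <- r | P i) f i).
Proof.
move=> h; elim/big_rec: _ => [|i x Pi Kx]; first exact: K0.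
by apply: KD => //; apply: h.
Qed.

Lemma kn0 : KN 0.
Proof. by move=> x _; rewrite mul0mx; apply: K0. Qed.
Lemma kn1 : KN 1.
Proof. by move=> x Kx; rewrite mul1mx. Qed.
Lemma knD M N : KN M -> KN N -> KN (M + N).
Proof. by move=> hM hN x Kx; rewrite mulmxDl; apply: KD; [apply: hM | apply: hN]. Qed.
Lemma knM M N : KN M -> KN N -> KN (M * N).
Proof. by move=> hM hN x Kx; rewrite -mulmxE -mulmxA; apply: hM; apply: hN. Qed.
Lemma knZ a M : 0 <= a -> KN M -> KN (a *: M).
Proof. by move=> a0 hM x Kx; rewrite -scalemxAl; apply: KZ => //; apply: hM. Qed.
Lemma knX M k : KN M -> KN (M ^+ k).
Proof.
move=> hM; elim: k => [|k IH]; first by rewrite expr0; apply: kn1.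
by rewrite exprS; apply: knM.
Qed.
Lemma knsum I (r : seq I) (P : pred I) (f : I -> 'M[R]_m.+1) :
  (forall i, P i -> KN (f i)) -> KN (\sum_(i <- r | P i) f i).
Proof.
move=> h; elim/big_rec: _ => [|i x Pi Kx]; first exact: kn0.
by apply: knD => //; apply: h.
Qed.

Lemma knB M N x : KN (M - N) -> K x -> K (M *m x - N *m x).
Proof. by move=> h Kx; rewrite -mulmxBl; apply: h. Qed.

Lemma K_lim g z : (forall N : nat, K (g - N.+1%:R *: z)) -> K (- z).
Proof.
case: pK => _ cl _ _ _ => h.
apply: closed_lim => // d d0.
pose S := \sum_i `|g i 0|.
have S0 : 0 <= S by apply: sumr_ge0.
pose N := Num.Def.archi_bound (S / d).
have hN : S / d < N%:R by apply: archi_boundP; rewrite divr_ge0 // ltW.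
exists (N.+1%:R^-1 *: g); split.
  move=> i; rewrite mxE normrM gtr0_norm ?invr_gt0 ?ltr0Sn //.
  have gi : `|g i 0| <= S by rewrite /S (bigD1 i) //= lerDl sumr_ge0.
  rewrite mulrC ler_pdivrMr ?ltr0Sn //.
  apply: (le_trans gi); move: hN; rewrite ltr_pdivrMr // => hN.
  rewrite mulrC; apply: ltW; apply: (lt_le_trans hN).
  by rewrite ler_pM2r // ler_nat.
have -> : N.+1%:R^-1 *: g + - z = N.+1%:R^-1 *: (g - N.+1%:R *: z).
  by rewrite scalerBr scalerA mulVf ?pnatr_eq0 // scale1r.
by apply: KZ; rewrite ?invr_ge0 ?ler0n.
Qed.

Lemma K_lim2 g z : (forall N : nat, K (g - N.+1%:R *: z)) ->
  (forall N : nat, K (g + N.+1%:R *: z)) -> z = 0.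
Proof.
move=> h1 h2; apply: Kpt; last exact: K_lim h1.
rewrite -[z]opprK; apply: (K_lim (g := g)) => N.
by rewrite scalerN opprK.
Qed.


Lemma cbound (L : 'cV[R]_m.+1 -> Prop) e : cone_ok L -> L e ->
  (forall z, exists c, 0 <= c /\ L (c *: e + z) /\ L (c *: e - z)) ->
  forall w : 'cV[R[i]]_m.+1, exists c, [/\ 0 <= c, L (c *: e + reV w), L (c *: e - reV w),
     L (c *: e + imV w) & L (c *: e - imV w)].
Proof.
move=> [L0 LZ LD] Le hb w.
have [cu [cu0 [hu1 hu2]]] := hb (reV w).
have [cv [cv0 [hv1 hv2]]] := hb (imV w).
exists (cu + cv); split; first by rewrite addr_ge0.
- by rewrite scalerDl addrAC; apply: LD => //; apply: LZ.
- by rewrite scalerDl addrAC; apply: LD => //; apply: LZ.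
- by rewrite scalerDl -addrA; apply: LD => //; apply: LZ.
- by rewrite scalerDl -addrA; apply: LD => //; apply: LZ.
Qed.

Lemma reVN p (z : R[i]) (w : 'cV[R[i]]_p) : reV ((- z) *: w) = - reV (z *: w).
Proof. by apply/matrixP => i j; rewrite !reVZ !mxE; case: z => a b /=; ring. Qed.

Lemma ncN (z : R[i]) : nc (- z) = nc z.
Proof. by case: z => a b; rewrite /Normc.normc /= !sqrrN. Qed.

Lemma pick_z0 p (w : 'cV[R[i]]_p) : w != 0 -> exists z0, nc z0 = 1 /\ reV (z0 *: w) != 0.
Proof.
move=> w0; case: (eqVneq (reV w) 0) => hr.
  exists (- 'i)%C; split.
    by rewrite ncN /Normc.normc /= expr0n add0r expr1n sqrtr1.
  rewrite reVZ hr scaler0 /= sub0r scaleN1r opprK.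
  apply: contra w0 => /eqP hi; apply/eqP/matrixP => i j.
  move/matrixP: hr => /(_ i j); move/matrixP: hi => /(_ i j); rewrite !mxE.
  by case: (w i j) => a b /= -> ->.
by exists 1; split; rewrite ?Normc.normc1 // scale1r.
Qed.

Lemma accum (a : nat -> 'cV[R]_m.+1) g z : (forall N, K (g - \sum_(k < N) a k)) ->
  (forall k, K (a k - z)) -> forall N, K (g - N.+1%:R *: z).
Proof.
move=> hg ha N.
have -> : g - N.+1%:R *: z = (g - \sum_(k < N.+1) a k) + \sum_(k < N.+1) (a k - z).
  by rewrite sumrB sumr_const card_ord scaler_nat addrA subrK.
by apply: KD => //; apply: Ksum => k _.
Qed.

Lemma rho_ge0 (M : 'M[R]_m.+1) : 0 <= spectral_radius M.
Proof. by have [l [_ -> _]] := rho_spec M; apply: nc_ge0. Qed.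

Lemma fix_zero (M Y Fb G0 : 'M[R]_m.+1) : KN M -> KN Y -> Y * Fb = 1 ->
  (forall N, KN (G0 - \sum_(k < N) M ^+ k * Y)) -> forall v : 'cV[R]_m.+1, M *m v = v -> v = 0.
Proof.
move=> kM kY YF hG v Mv.
have [e he] := K_int.
have Ke : K e by apply: nbhs_singleton.
have cK : is_cone K by case: pK.
have [c [c0 [h1 h2]]] := interior_bound (Fb *m v) cK he.
have Mkv k : M ^+ k *m v = v.
  by elim: k => [|k IH]; rewrite ?expr0 ?mul1mx // exprSr -mulmxE -mulmxA Mv.
pose a k := c *: (M ^+ k * Y *m e).
have ea k sg : a k - sg *: v = M ^+ k * Y *m (c *: e - sg *: (Fb *m v)).
  have YFv : Y *m (Fb *m v) = v by rewrite mulmxA -[Y *m Fb]/(Y * Fb) YF mul1mx.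
  rewrite mulmxBr; congr (_ - _); first by rewrite /a scalemxAr.
  by rewrite -scalemxAr -[M ^+ k * Y]/(M ^+ k *m Y) -mulmxA YFv Mkv.
have hsum N : K (c *: (G0 *m e) - \sum_(k < N) a k).
  rewrite /a -scaler_sumr -mulmx_suml -scalerBr -mulmxBl.
  by apply: KZ => //; apply: hG.
apply: (@K_lim2 (c *: (G0 *m e))) => N.
  apply: (accum hsum) => k; have := ea k 1; rewrite !scale1r => ->.
  by apply: (knM (knX k kM) kY).
have hm : forall N, K (c *: (G0 *m e) - N.+1%:R *: (- v)).
  apply: (accum hsum) => k; have := ea k (-1); rewrite !scaleN1r => ->.
  by rewrite opprK; apply: (knM (knX k kM) kY).
by have := hm N; rewrite scalerN opprK.
Qed.


Lemma rho_lt1 (Tb C0 : 'M[R]_m.+1) : KN Tb ->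
  (forall N, KN (C0 - \sum_(k < N) Tb ^+ k)) ->
  forall mu, root (char_poly (map_mx toC Tb)) mu -> nc mu < 1.
Proof.
move=> kT hC mu rmu; rewrite ltNge; apply/negP => mu1.
have mu0 : mu != 0 by apply: contraTneq mu1 => ->; rewrite Normc.normc0 ler10.
have [w w0 Tw] := eigvec rmu.
have [e he] := K_int.
have Ke : K e by apply: nbhs_singleton.
have cK : is_cone K by case: pK.
have [c [c0 b1 b2 b3 b4]] := cbound cone_K Ke (fun z => interior_bound z cK he) w.
have [z0 [z01 zz0]] := pick_z0 w0.
set zz := reV (z0 *: w) in zz0.
have EB := eig_bound cone_K (fun x Kx => kT x Kx) Tw mu0 b1 b2 b3 b4.
have nmu0 : 0 < nc mu by apply: lt_le_trans mu1.
have Kak k : K ((c + c) *: (Tb ^+ k *m e)) by apply: KZ; [rewrite addr_ge0 | apply: knX].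
have key sg : nc sg = 1 -> forall k, K ((c + c) *: (Tb ^+ k *m e) - reV (sg *: w)).
  move=> sg1 k; have h := EB sg sg1 k.
  have hp : 0 < nc mu ^+ k by rewrite exprn_gt0.
  have -> : (c + c) *: (Tb ^+ k *m e) - reV (sg *: w) =
     (nc mu ^+ k)^-1 *: ((c + c) *: (Tb ^+ k *m e) - nc mu ^+ k *: reV (sg *: w))
     + (1 - (nc mu ^+ k)^-1) *: ((c + c) *: (Tb ^+ k *m e)).
    apply/matrixP => i j; rewrite !mxE; field.
    by rewrite gt_eqF.
  apply: KD; first by apply: KZ => //; rewrite invr_ge0 ltW.
  apply: KZ => //; rewrite subr_ge0 invf_le1 // exprn_ege1 //.
have hsum N : K ((c + c) *: (C0 *m e) - \sum_(k < N) (c + c) *: (Tb ^+ k *m e)).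
  rewrite -scaler_sumr -mulmx_suml -scalerBr -mulmxBl.
  by apply: KZ; [rewrite addr_ge0 | apply: hC].
have : zz = 0.
  apply: (@K_lim2 ((c + c) *: (C0 *m e))) => N.
    by apply: (accum (a := fun k => (c + c) *: (Tb ^+ k *m e)) hsum) => k; apply: key.
  have hm : forall N, K ((c + c) *: (C0 *m e) - N.+1%:R *: (- zz)).
    apply: (accum (a := fun k => (c + c) *: (Tb ^+ k *m e)) hsum) => k; rewrite /zz -reVN; apply: key.
    by rewrite ncN.
  by have := hm N; rewrite scalerN opprK.
by move/eqP; rewrite (negbTE zz0).
Qed.


Lemma rho_cmp (T Tb A : 'M[R]_m.+1) : A \in unitmx -> KN Tb ->
  (forall y, K (A *m y) -> K (A *m (T *m y))) ->
  (forall y, K (A *m y) -> K (Tb *m y - T *m y)) -> KN (invmx A) ->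
  forall mu, root (char_poly (map_mx toC T)) mu -> nc mu <= spectral_radius Tb.
Proof.
move=> Au kTb TL TTb kAi mu rmu; rewrite leNgt; apply/negP => hlt.
set t := nc mu in hlt.
have t0 : 0 < t by apply: le_lt_trans hlt; apply: rho_ge0.
have mu0 : mu != 0 by apply/eqP => h; move: t0; rewrite /t h Normc.normc0 ltxx.
have [w w0 Tw] := eigvec rmu.
have [e he] := K_int.
have Ke : K e by apply: nbhs_singleton.
have cK : is_cone K by case: pK.
pose L := fun y => K (A *m y).
have AAi : A *m invmx A = 1%:M by apply: mulmxV.
have AiA : invmx A *m A = 1%:M by apply: mulVmx.
have cL : cone_ok L.
  split; first by rewrite /L mulmx0; apply: K0.
    by move=> a x a0 Lx; rewrite /L -scalemxAr; apply: KZ.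
  by move=> x y Lx Ly; rewrite /L mulmxDr; apply: KD.
pose e' := invmx A *m e.
have Le' : L e' by rewrite /L /e' mulmxA AAi mul1mx.
have bL : forall z, exists c, 0 <= c /\ L (c *: e' + z) /\ L (c *: e' - z).
  move=> z; have [c [c0 [h1 h2]]] := interior_bound (A *m z) cK he.
  exists c; split => //; rewrite /L mulmxDr ?mulmxBr -scalemxAr /e' mulmxA AAi mul1mx.
  by split.
have [c [c0 b1 b2 b3 b4]] := cbound cL Le' bL w.
have [z0 [z01 zz0]] := pick_z0 w0.
set zz := reV (z0 *: w) in zz0.
have EB := eig_bound cL TL Tw mu0 b1 b2 b3 b4.
have LK y : L y -> K y.
  by move=> Ly; have := kAi _ Ly; rewrite mulmxA AiA mul1mx.
have TkL : forall k, L (T ^+ k *m e') /\ K (Tb ^+ k *m e' - T ^+ k *m e').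
  elim => [|k [IH1 IH2]]; first by rewrite expr0 mul1mx subrr; split => //; apply: K0.
  split; first by rewrite exprS -mulmxE -mulmxA; apply: TL.
  have -> : Tb ^+ k.+1 *m e' - T ^+ k.+1 *m e' =
      Tb *m (Tb ^+ k *m e' - T ^+ k *m e') + (Tb *m (T ^+ k *m e') - T *m (T ^+ k *m e')).
    by rewrite !exprS -!mulmxE -!mulmxA mulmxBr addrA subrK.
  by apply: KD; [apply: kTb | apply: TTb].
have key sg : nc sg = 1 -> forall k,
    K (((c + c) / t ^+ k) *: (Tb ^+ k *m e') - reV (sg *: w)).
  move=> sg1 k; have h := LK _ (EB sg sg1 k).
  have hp : 0 < t ^+ k by rewrite exprn_gt0.
  have -> : ((c + c) / t ^+ k) *: (Tb ^+ k *m e') - reV (sg *: w) =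
     (t ^+ k)^-1 *: ((c + c) *: (Tb ^+ k *m e' - T ^+ k *m e')
        + ((c + c) *: (T ^+ k *m e') - t ^+ k *: reV (sg *: w))).
    apply/matrixP => i j; rewrite !mxE; field.
    by rewrite gt_eqF.
  apply: KZ; first by rewrite invr_ge0 ltW.
  by apply: KD => //; apply: KZ; [rewrite addr_ge0 | case: (TkL k)].
have [l [rl rhoE lmax]] := rho_spec Tb.
have hroots : forall l', root (char_poly (map_mx toC Tb)) l' -> nc l' < t.
  by move=> l' /lmax hl'; apply: le_lt_trans hlt; rewrite rhoE.
pose S := \sum_j `|e' j 0|.
have S0 : 0 <= S by apply: sumr_ge0.
have small : forall d, 0 < d -> exists v : 'cV[R]_m.+1, (forall i, `|v i 0| <= d) /\
    (forall sg, nc sg = 1 -> K (v - reV (sg *: w))).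
  move=> d d0.
  pose eps := d / ((c + c) * S + 1).
  have D0 : 0 < (c + c) * S + 1 by rewrite ltr_wpDl // mulr_ge0 // addr_ge0.
  have eps0 : 0 < eps by rewrite divr_gt0.
  have [N HN] := real_pow_small t0 hroots eps0.
  exists (((c + c) / t ^+ N) *: (Tb ^+ N *m e')); split; last by move=> sg sg1; apply: key.
  move=> i; rewrite mxE normrM mxE.
  have hpN : 0 < t ^+ N by rewrite exprn_gt0.
  rewrite ger0_norm; last by rewrite divr_ge0 ?addr_ge0 // ltW.
  have hb : `|\sum_j (Tb ^+ N) i j * e' j 0| <= eps * t ^+ N * S.
    apply: (le_trans (ler_norm_sum _ _ _)); rewrite /S mulr_sumr; apply: ler_sum => j _.
    rewrite normrM ler_wpM2r //; exact: HN.
  apply: (le_trans (y := (c + c) / t ^+ N * (eps * t ^+ N * S))).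
    by apply: ler_wpM2l; [rewrite divr_ge0 ?addr_ge0 // ltW | exact: hb].
  have -> : (c + c) / t ^+ N * (eps * t ^+ N * S) = ((c + c) * S) * eps.
    by field; rewrite gt_eqF.
  have cS : 0 <= (c + c) * S by rewrite mulr_ge0 // addr_ge0.
  rewrite /eps mulrA ler_pdivrMr //; nra.
have : zz = 0.
  have Kp : K (- zz).
    case: pK => _ cl _ _ _; apply: closed_lim => // d d0.
    have [v [vb vK]] := small d d0; exists v; split => //; exact: vK.
  have Km : K zz.
    case: pK => _ cl _ _ _; apply: closed_lim => // d d0.
    have [v [vb vK]] := small d d0; exists v; split => //.
    by rewrite /zz -[X in _ + X]opprK -reVN; apply: vK; rewrite ncN.
  exact: Kpt.
by move/eqP; rewrite (negbTE zz0).
Qed.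

Lemma main_pos (A U V F G Fb Gb : 'M[R]_m.+1) (s : nat) :
  K_monotone K A ->
  K_regular_splitting K A U V ->
  K_weak_regular_splitting_II K U F G ->
  K_weak_regular_splitting_II K U Fb Gb ->
  V *m invmx F *m G = G *m invmx F *m V ->
  V *m invmx Fb *m Gb = Gb *m invmx Fb *m V ->
  (forall t : nat, (0 < t)%N ->
     Knonneg K
       ((mxpow (Gb *m invmx Fb) t
         + \sum_(j < t) mxpow (Gb *m invmx Fb) j *m V *m invmx Fb)
        *m invmx (\sum_(j < t) mxpow (invmx Fb *m Gb) j *m invmx Fb))) ->
  Kge K (invmx F) (invmx Fb) ->
  Knonneg K (invmx Fb *m Gb) ->
  (0 < s)%N ->
  spectral_radius
      (mxpow (invmx F *m G) s
       + \sum_(j < s) mxpow (invmx F *m G) j *m invmx F *m V)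
    <= spectral_radius
      (mxpow (invmx Fb *m Gb) s
       + \sum_(j < s) mxpow (invmx Fb *m Gb) j *m invmx Fb *m V)
  /\ spectral_radius
      (mxpow (invmx Fb *m Gb) s
       + \sum_(j < s) mxpow (invmx Fb *m Gb) j *m invmx Fb *m V) < 1.
Proof.
move=> [Au kAi] [AUV Uu kUi kV] [UFG Fu kX kKf] [UFGb Fbu kY kHh] cF cFb hi hii kH s0.
have hs := hi s s0; move: hs; clear hi => hi.
rewrite !mxpowE !mulmxE in cF cFb kKf kHh kH hi *.
rewrite /Kge in hii.
set X := invmx F in cF kKf hi hii kX *.
set Y := invmx Fb in cFb kHh hi hii kY kH *.
set Ui := invmx U in kUi.
set Ai := invmx A in kAi.
have XF : X * F = 1 by apply: mulVmx.
have YFb : Y * Fb = 1 by apply: mulVmx.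
have FX : F * X = 1 by apply: mulmxV.
have FbY : Fb * Y = 1 by apply: mulmxV.
have UiU : Ui * U = 1 by apply: mulVmx.
have UUi : U * Ui = 1 by apply: mulmxV.
have AiA : Ai * A = 1 by apply: mulVmx.
have AAi : A * Ai = 1 by apply: mulmxV.
have XU : X * U = 1 - X * G by rewrite UFG mulrBr XF.
have UX : U * X = 1 - G * X by rewrite UFG mulrBl FX.
have YU : Y * U = 1 - Y * Gb by rewrite UFGb mulrBr YFb.
have UY : U * Y = 1 - Gb * Y by rewrite UFGb mulrBl FbY.
set Hf := X * G in XU *.
set Kf := G * X in UX kKf *.
set H := Y * Gb in YU kH *.
set Hh := Gb * Y in UY kHh *.
set SF := \sum_(j < s) Hf ^+ j * X.
set Sb := \sum_(j < s) H ^+ j * Y.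
set T := Hf ^+ s + _.
set Tb := H ^+ s + _.
have SFU : SF * U = 1 - Hf ^+ s.
  by rewrite -tele /SF mulr_suml; apply: eq_bigr => j _; rewrite -mulrA XU.
have SbU : Sb * U = 1 - H ^+ s.
  by rewrite -tele /Sb mulr_suml; apply: eq_bigr => j _; rewrite -mulrA YU.
have SFE : SF = \sum_(j < s) X * Kf ^+ j.
  by apply: eq_bigr => j _; rewrite /Hf /Kf powcomm.
have SbE : Sb = \sum_(j < s) Y * Hh ^+ j.
  by apply: eq_bigr => j _; rewrite /H /Hh powcomm.
have USF : U * SF = 1 - Kf ^+ s.
  by rewrite SFE -tele' mulr_sumr mulr_sumr; apply: eq_bigr => j _; rewrite mulrA UX.
have USb : U * Sb = 1 - Hh ^+ s.
  by rewrite SbE -tele' mulr_sumr mulr_sumr; apply: eq_bigr => j _; rewrite mulrA UY.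
have TE : T = 1 - SF * A.
  rewrite AUV mulrBr SFU sub3 /T; congr (_ + _).
  by rewrite /SF mulr_suml.
have TbE : Tb = 1 - Sb * A.
  rewrite AUV mulrBr SbU sub3 /Tb; congr (_ + _).
  by rewrite /Sb mulr_suml.
have cVX : GRing.comm (V * X) Kf.
  by rewrite /GRing.comm /Kf mulrA cF -!mulrA.
have cVY : GRing.comm (V * Y) Hh.
  by rewrite /GRing.comm /Hh mulrA cFb -!mulrA.
have ThE : 1 - A * SF = Kf ^+ s + \sum_(j < s) Kf ^+ j * V * X.
  rewrite AUV mulrBl USF sub3; congr (_ + _).
  rewrite SFE mulr_sumr; apply: eq_bigr => j _.
  by rewrite mulrA (commrX j cVX) mulrA.
have TbhE : 1 - A * Sb = Hh ^+ s + \sum_(j < s) Hh ^+ j * V * Y.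
  rewrite AUV mulrBl USb sub3; congr (_ + _).
  rewrite SbE mulr_sumr; apply: eq_bigr => j _.
  by rewrite mulrA (commrX j cVY) mulrA.
have [s' es] : exists s', s = s'.+1 by exists s.-1; rewrite prednK.
have kHs : KN (H ^+ s) by apply: knX.
have kSbY : KN (Sb - Y).
  rewrite /Sb es big_ord_recl /= expr0 mul1r addrAC subrr add0r.
  by apply: knsum => j _; apply: knM => //; apply: knX.
have Sbdec : Sb = (1 - H ^+ s) * Ui by rewrite -SbU -mulrA UUi mulr1.
have hG : forall N, KN (Ui - \sum_(k < N) (H ^+ s) ^+ k * Y).
  move=> N.
  have e1 : \sum_(k < N) (H ^+ s) ^+ k * Sb = Ui - (H ^+ s) ^+ N * Ui.
    rewrite Sbdec; under eq_bigr do rewrite mulrA.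
    by rewrite -mulr_suml tele mulrBl mul1r.
  have -> : Ui - \sum_(k < N) (H ^+ s) ^+ k * Y =
      (H ^+ s) ^+ N * Ui + \sum_(k < N) (H ^+ s) ^+ k * (Sb - Y).
    under [in RHS]eq_bigr do rewrite mulrBr.
    by rewrite sumrB e1 addrA [_ * Ui + _]addrC subrK.
  apply: knD; first by apply: knM => //; apply: knX.
  by apply: knsum => k _; apply: knM => //; apply: knX.
have fz := fix_zero (knX s kH) kY YFb hG.
have u1 : (1 - H ^+ s) \in unitmx.
  apply: contraT => nu; rewrite unitmxE unitfE negbK -det_tr in nu.
  move/det0P: nu => [v v0 hv].
  have hv' : (1 - H ^+ s) *m v^T = 0 by rewrite -[1 - H ^+ s]trmxK -trmx_mul hv linear0.
  have : v^T = 0.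
    apply: fz.
    have -> : H ^+ s *m v^T = v^T - (1 - H ^+ s) *m v^T.
      by rewrite mulmxBl mul1mx opprB addrC subrK.
    by rewrite hv' subr0.
  by move/eqP; rewrite trmx_eq0 (negbTE v0).
have Sbu : Sb \in unitmx by rewrite Sbdec unitmx_mul u1 unitmx_inv.
have SbSbi : Sb * invmx Sb = 1 by apply: mulmxV.
have kSbA : KN (invmx Sb - A).
  move: hi; rewrite -/Hh -/H -/Sb -TbhE mulrBl mul1r -mulrA SbSbi mulr1 //.
pose C0 := Ai * invmx Sb.
have kC0 : KN C0.
  have -> : C0 = Ai * (invmx Sb - A) + 1 by rewrite mulrBr AiA subrK.
  by apply: knD; [apply: knM | apply: kn1].
have ITb : 1 - Tb = Sb * A by rewrite TbE opprB addrC subrK.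
have ITbC : (1 - Tb) * C0 = 1.
  by rewrite ITb /C0 -mulrA [A * _]mulrA AAi mul1r SbSbi.
have kTb : KN Tb.
  apply: knD; first exact: knX.
  by apply: knsum => j _; apply: knM => //; apply: knM => //; apply: knX.
have hC : forall N, KN (C0 - \sum_(k < N) Tb ^+ k).
  move=> N.
  have -> : \sum_(k < N) Tb ^+ k = C0 - Tb ^+ N * C0.
    by rewrite -[LHS]mulr1 -ITbC mulrA mulr_suml tele mulrBl mul1r.
  by rewrite opprB addrC subrK; apply: knM => //; apply: knX.
split; last first.
  have [l [rl -> _]] := rho_spec Tb.
  exact: (rho_lt1 kTb hC rl).
have kD : KN (SF - Sb).
  have HUi : H * Ui = Ui - Y.
    have -> : H = 1 - Y * U by rewrite YU opprB addrC subrK.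
    by rewrite mulrBl mul1r -mulrA UUi mulr1.
  have UiKf : Ui * Kf = Ui - X.
    have -> : Kf = 1 - U * X by rewrite UX opprB addrC subrK.
    by rewrite mulrBr mulr1 mulrA UiU mul1r.
  have ind : forall j, KN (H ^+ j * Ui - Ui * Kf ^+ j).
    elim => [|j IH]; first by rewrite !expr0 mul1r mulr1 subrr; apply: kn0.
    have -> : H ^+ j.+1 * Ui - Ui * Kf ^+ j.+1 =
        H * (H ^+ j * Ui - Ui * Kf ^+ j) + (H * Ui - Ui * Kf) * Kf ^+ j.
      rewrite mulrBr mulrBl (mulrA H Ui) addrA subrK mulrA -exprS.
      by rewrite -mulrA -exprS.
    apply: knD; first exact: knM.
    by rewrite HUi UiKf opprB addrC addrA subrK; apply: knM => //; apply: knX.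
  have -> : SF - Sb = H ^+ s * Ui - Ui * Kf ^+ s.
    have -> : SF = Ui * (1 - Kf ^+ s) by rewrite -USF mulrA UiU mul1r.
    rewrite Sbdec mulrBr mulrBl mulr1 mul1r opprB addrA.
    by rewrite addrAC [Ui - _ - Ui]addrAC subrr add0r addrC.
  exact: ind.
have kTh : KN (1 - A * SF).
  rewrite ThE; apply: knD; first exact: knX.
  by apply: knsum => j _; apply: knM => //; apply: knM => //; apply: knX.
have TL : forall y, K (A *m y) -> K (A *m (T *m y)).
  move=> y Ky; rewrite mulmxA.
  have E : A * T = (1 - A * SF) * A.
    by rewrite TE mulrBr mulr1 mulrBl mul1r mulrA.
  by rewrite -[A *m T]/(A * T) E -mulmxA; apply: kTh.
have TTb : forall y, K (A *m y) -> K (Tb *m y - T *m y).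
  move=> y Ky; rewrite -mulmxBl.
  have -> : Tb - T = (SF - Sb) * A.
    by rewrite TbE TE mulrBl opprB addrC addrA subrK addrC.
  by rewrite -mulmxA; apply: kD.
have [l [rl -> _]] := rho_spec T.
exact: (rho_cmp Au kTb TL TTb kAi rl).
Qed.

End Cone.

Unset Implicit Arguments.

Lemma sr0 (R : realType) (M : 'M[R]_0) : spectral_radius M = 0.
Proof.
rewrite /spectral_radius.
have -> : [set r : R | exists l : R[i],
    root (char_poly (map_mx (fun x : R => x%:C%C) M)) l /\ r = Normc.normc l] = set0.
  apply/seteqP; split => // r [l [rl _]].
  have /size_poly1P [c c0 pc] : size (char_poly (map_mx (fun x : R => x%:C%C) M)) == 1%N.
    by rewrite size_char_poly.
  by move: rl; rewrite pc rootC (negbTE c0).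
exact: sup0.
Qed.

Theorem theorem3p11 (R : realType) (n : nat) (K : set 'cV[R]_n)
  (A U V F G Fb Gb : 'M[R]_n) (s : nat) :
  proper_cone K ->
  K_monotone K A ->
  K_regular_splitting K A U V ->
  K_weak_regular_splitting_II K U F G ->
  K_weak_regular_splitting_II K U Fb Gb ->
  V *m invmx F *m G = G *m invmx F *m V ->
  V *m invmx Fb *m Gb = Gb *m invmx Fb *m V ->
  (* (i) *)
  (forall t : nat, (0 < t)%N ->
     Knonneg K
       ((mxpow (Gb *m invmx Fb) t
         + \sum_(j < t) mxpow (Gb *m invmx Fb) j *m V *m invmx Fb)
        *m invmx (\sum_(j < t) mxpow (invmx Fb *m Gb) j *m invmx Fb))) ->
  (* (ii) *)
  Kge K (invmx F) (invmx Fb) ->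
  (* (iii) *)
  Knonneg K (invmx Fb *m Gb) ->
  (0 < s)%N ->
  spectral_radius
      (mxpow (invmx F *m G) s
       + \sum_(j < s) mxpow (invmx F *m G) j *m invmx F *m V)
    <= spectral_radius
      (mxpow (invmx Fb *m Gb) s
       + \sum_(j < s) mxpow (invmx Fb *m Gb) j *m invmx Fb *m V)
  /\ spectral_radius
      (mxpow (invmx Fb *m Gb) s
       + \sum_(j < s) mxpow (invmx Fb *m Gb) j *m invmx Fb *m V) < 1.
Proof.
destruct n as [|m]; move=> pK.
  by move=> *; rewrite !sr0; split => //; rewrite ltr01.
move=> hA hreg hF hFb cF cFb hi hii hiii s0; exact: (main_pos pK hA hreg hF hFb cF cFb hi hii hiii s0).
Qed.
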